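(* For every $h\in\widehat{\operatorname{PC}^{\bowtie}}$ and every partition $\mathcal P$ associated with $h$, one has $\varepsilon(h)=\varepsilon(h,\mathcal P)$.
   Context: $X=[0,1[$; $\widehat{\operatorname{PC}^{\bowtie}}$ is the group of bijections $X\to X$ continuous outside a finite subset, containing the group ${\mathfrak S}_{\mathrm{fin}}$ of finitely supported permutations with classical signature $\operatorname{sgn}$ valued in $\mathbb{Z}/2\mathbb{Z}$. For $h\in\widehat{\operatorname{PC}^{\bowtie}}$, a partition associated with $h$ is a finite partition $\mathcal P=\{I_1,\dots,I_n\}$ of $X$ into intervals $I_j=[\alpha_j,b_j[$ such that $h$ is continuous on $I_j^\circ=]\alpha_j,b_j[$ for each $j$ (so $h$ is strictly monotone there and $h(I_j^\circ)$ is an open interval). Let $\beta_j$ be the left endpoint of $h(I_j^\circ)$; $\{h(\alpha_j)\}=\{\beta_j\}$, and $\sigma_{(h,\mathcal P)}\in{\mathfrak S}_{\mathrm{fin}}$ sends $h(\alpha_j)$ to $\beta_j$ for each $j$ and fixes all other points. $R(h,\mathcal P)$ is the number of $j$ with $h$ decreasing on $I_j^\circ$, and $\varepsilon(h,\mathcal P)=R(h,\mathcal P)+\operatorname{sgn}(\sigma_{(h,\mathcal P)})\bmod 2$. There is a unique associated partition $\mathcal P^{\min}_h$ with the fewest intervals, every associated partition refines it, and $\varepsilon(h):=\varepsilon(h,\mathcal P^{\min}_h)$. *)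

(* Defs.v *)
From HB Require Import structures.
From mathcomp Require Import all_boot all_order all_algebra.
From mathcomp Require Import all_classical all_reals all_analysis.
Set Implicit Arguments. Unset Strict Implicit. Unset Printing Implicit Defensive.
Import Order.TTheory GRing.Theory Num.Theory numFieldNormedType.Exports.
Local Open Scope classical_set_scope.
Local Open Scope ring_scope.

Section PCbowtie.
Variable R : realType.

Definition X : set R := `[0, 1[%classic.

(** h : X -> X (extended arbitrarily outside X) is a bijection of X,
    continuous (for the subspace topology of X) outside a finite subset. *)
Definition in_PCbowtie (h : R -> R) : Prop :=
  set_bij X X h /\
  exists F : set R, finite_set F /\
    forall x, X x -> ~ F x -> (h @ within X (nbhs x) : set_system R) --> h x.

(** A finite partition of X into intervals [a_j, b_j[ is a list of pairs
    (a_j, b_j); it is associated with h when each block is a nonempty interval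
    contained in X, every point of X lies in exactly one block, and h is
    continuous on each open interval ]a_j, b_j[. *)
Definition assoc_partition (h : R -> R) (P : seq (R * R)) : Prop :=
  [/\ forall p, p \in P -> 0 <= p.1 /\ p.1 < p.2 /\ p.2 <= 1,
      forall x, X x -> count (fun p => (p.1 <= x) && (x < p.2)) P = 1%N
    & forall p, p \in P -> forall x, p.1 < x < p.2 -> {for x, continuous h}].

Definition decreasing_on (h : R -> R) (p : R * R) : Prop :=
  forall x y, p.1 < x < p.2 -> p.1 < y < p.2 -> x < y -> h y < h x.

Definition Rdec (h : R -> R) (P : seq (R * R)) : nat :=
  count (fun p => `[< decreasing_on h p >]) P.

Definition beta (h : R -> R) (p : R * R) : R := inf (h @` `]p.1, p.2[%classic).

Definition sigma (h : R -> R) (P : seq (R * R)) (x : R) : R :=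
  let i := find (fun p => h p.1 == x) P in
  if (i < size P)%N then beta h (nth (0, 0) P i) else x.

(** Classical signature (as an element of Z/2Z = bool) of a finitely supported
    permutation s whose support is contained in the duplicate-free list S:
    the parity of the number of inversions of s on S. *)
Definition sgn_on (s : R -> R) (S : seq R) : bool :=
  odd (\sum_(x <- S) \sum_(y <- S) (((x < y)%R && (s y < s x)%R) : nat))%N.

Definition eps (h : R -> R) (P : seq (R * R)) : bool :=
  odd (Rdec h P) (+) sgn_on (sigma h P) [seq h p.1 | p <- P].

Definition min_assoc_partition (h : R -> R) (P : seq (R * R)) : Prop :=
  assoc_partition h P /\ forall Q, assoc_partition h Q -> (size P <= size Q)%N.

End PCbowtie.

(* Main.v *)
Require Import Defs.
From HB Require Import structures.
From mathcomp Require Import all_boot all_order all_algebra.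
From mathcomp Require Import all_classical all_reals all_analysis.
From mathcomp Require Import zify.
Set Implicit Arguments. Unset Strict Implicit. Unset Printing Implicit Defensive.
Import Order.TTheory GRing.Theory Num.Theory numFieldNormedType.Exports.
Local Open Scope classical_set_scope.
Local Open Scope ring_scope.

Section Comb.
Variable R : realType.
Implicit Types (s : R -> R) (S T : seq R).

Definition gg s (x y : R) : nat := ((x < y) && (s y < s x)).
Definition inv s S : nat := (\sum_(x <- S) \sum_(y <- S) gg s x y)%N.
Definition pp s x y : nat := (gg s x y + gg s y x)%N.

Lemma sgn_inv s S : sgn_on s S = odd (inv s S).
Proof. by []. Qed.

Lemma inv_cons s x S : inv s (x :: S) = (inv s S + \sum_(y <- S) pp s x y)%N.
Proof.
rewrite /inv; under eq_bigr => j _ do rewrite big_cons.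
rewrite big_cons /=.
rewrite big_split /= /pp big_split /= {1}/gg ltxx /=. lia.
Qed.

Lemma sumb_count (b : pred R) S : (\sum_(x <- S) (b x : nat))%N = count b S.
Proof. by elim: S => [|x S IH]; rewrite ?big_nil ?big_cons ?IH. Qed.

Lemma count_split (a b : pred R) S :
  count a S = (count (predI a b) S + count (predI a (predC b)) S)%N.
Proof.
elim: S => [|x S IH] //=; rewrite IH /=.
by case: (a x); case: (b x) => /=; lia.
Qed.

Lemma odd_fix s y S : perm_eq (map s S) S -> y \notin S -> s y = y ->
  odd (inv s (y :: S)) = odd (inv s S).
Proof.
move=> pS yS sy; rewrite inv_cons oddD.
suff -> : odd (\sum_(x <- S) pp s y x) = false by rewrite addbF.
have -> : (\sum_(x <- S) pp s y x = count (fun x : R => (y < x)%R && (s x < y)%R) S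
       + count (fun x : R => (x < y)%R && (y < s x)%R) S)%N.
  rewrite -!sumb_count -big_split /=; apply: eq_bigr => x _.
  by rewrite /pp /gg sy.
have c1 : count (fun x : R => x < y) S = count (fun x : R => s x < y) S.
  by by rewrite -(permP pS) count_map.
rewrite (count_split _ (fun x : R => s x < y)) in c1.
rewrite [in RHS](count_split _ (fun x : R => x < y)) in c1.
have e1 : count (predI (fun x : R => x < y) (predC (fun x : R => s x < y))) S =
          count (fun x : R => (x < y) && (y < s x)) S.
  apply: eq_in_count => x xS /=; congr andb.
  have sxS : s x \in S by rewrite -(perm_mem pS); apply: map_f.
  have : s x != y by apply: contraNneq yS => <-.
  by rewrite -leNgt le_eqVlt eq_sym => /negbTE ->.
have e2 : count (predI (fun x : R => s x < y) (predC (fun x : R => x < y))) S =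
          count (fun x : R => (y < x) && (s x < y)) S.
  apply: eq_in_count => x xS /=; rewrite andbC; congr andb.
  have : x != y by apply: contraNneq yS => <-.
  by rewrite -leNgt le_eqVlt eq_sym => /negbTE ->.
have e3 : count (predI (fun x : R => x < y) (fun x : R => s x < y)) S =
          count (predI (fun x : R => s x < y) (fun x : R => x < y)) S.
  by apply: eq_count => x /=; rewrite andbC.
rewrite e1 e2 e3 in c1.
have e : count (fun x : R => (x < y)%R && (y < s x)%R) S =
  count (fun x : R => (y < x)%R && (s x < y)%R) S by lia.
by rewrite e addnn odd_double.
Qed.

Lemma pp_xor s x y : x != y -> s x != s y ->
  pp s x y = ((x < y) != (s x < s y)) :> nat.
Proof.
move=> nxy nsxy; rewrite /pp /gg.
case: (ltgtP x y) => [xy|yx|exy]; last by rewrite exy eqxx in nxy.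
- case: (ltgtP (s x) (s y)) => [//|//|e]; by rewrite e eqxx in nsxy.
- case: (ltgtP (s x) (s y)) => [//|//|e]; by rewrite e eqxx in nsxy.
Qed.

Lemma odd_sum_eq (f f' : R -> nat) T :
  {in T, forall t, odd (f t) = odd (f' t)} ->
  odd (\sum_(t <- T) f t)%N = odd (\sum_(t <- T) f' t)%N.
Proof.
elim: T => [|t T IH] H; first by rewrite !big_nil.
rewrite !big_cons !oddD H ?mem_head // IH // => z zT.
by apply: H; rewrite in_cons zT orbT.
Qed.

Lemma inv_eq s s' S : {in S, s =1 s'} -> inv s S = inv s' S.
Proof.
move=> e; apply: eq_big_seq => x xS; apply: eq_big_seq => y yS.
by rewrite /gg !e.
Qed.

Lemma odd_swap s s' u v T : u != v -> u \notin T -> v \notin T -> s u != s v ->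
  (forall t, t \in T -> s t != s u /\ s t != s v) ->
  s' u = s v -> s' v = s u -> {in T, s' =1 s} ->
  odd (inv s' [:: u, v & T]) = ~~ odd (inv s [:: u, v & T]).
Proof.
move=> nuv uT vT nsuv sT s'u s'v s's.
rewrite !inv_cons !big_cons /=.
have E : forall a b c d : nat,
    odd (a + b + (c + d))%N = odd a (+) odd c (+) odd (b + d)%N.
  by move=> a b c d; rewrite !oddD; case: (odd a); case (odd b); case (odd c); case (odd d).
rewrite !E (inv_eq s's) -!big_split /=.
have h3 : odd (pp s' u v) = ~~ odd (pp s u v).
  rewrite !pp_xor // ?s'u ?s'v ?oddb //; last by rewrite eq_sym.
  by move: nsuv; case: (ltgtP (s u) (s v)); case: (u < v).
rewrite h3 (odd_sum_eq (f' := fun t => (pp s v t + pp s u t)%N)) ?addbN ?addNb //.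
move=> t tT /=.
have ut : u != t by apply: contraNneq uT => ->.
have vt : v != t by apply: contraNneq vT => ->.
have [n1 n2] := sT t tT.
rewrite !pp_xor ?s'u ?s'v ?s's // ?(eq_sym (s v)) ?(eq_sym (s u)) //.
rewrite !oddD !oddb.
by case: (u < t); case: (v < t); case: (s u < s t); case: (s v < s t).
Qed.
End Comb.

Section Part.
Variable R : realType.
Variable h : R -> R.
Implicit Types (P Q : seq (R * R)) (p q : R * R).

Definition blk (x : R) p := (p.1 <= x) && (x < p.2).
Definition hS P := [seq h p.1 | p <- P].

Lemma XE (x : R) : X x = (0 <= x < 1).
Proof. by rewrite /X /= in_itv. Qed.

Lemma two_in P p q (a : pred (R * R)) : uniq P -> p \in P -> q \in P -> p != q ->
  a p -> a q -> (1 < count a P)%N.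
Proof.
move=> uP pP qP npq ap aq; rewrite -size_filter.
have : uniq [:: p; q] by rewrite /= inE npq.
move/uniq_leq_size => /(_ (seq.filter a P)) -> //.
by move=> z; rewrite !inE mem_filter => /orP[] /eqP ->; rewrite ?ap ?aq.
Qed.

Lemma assoc_uniq P : assoc_partition h P -> uniq P.
Proof.
case=> Hb Hc _; apply: count_mem_uniq => p.
case: (boolP (p \in P)) => pP; last by apply/count_memPn.
have [p1 [p12 p2]] := Hb p pP.
have le1 : (count_mem p P <= count (blk p.1) P)%N.
  by apply: sub_count => z /eqP ->; rewrite /blk lexx p12.
rewrite Hc in le1; last by rewrite XE p1 (lt_le_trans p12 p2).
have : (0 < count_mem p P)%N by rewrite -has_count; apply/hasP; exists p; rewrite /= ?eqxx.
move=> H; rewrite /=; move: H le1; case: (count_mem p P) => [|[|]] //.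
Qed.

Lemma assoc_X P p x : assoc_partition h P -> p \in P -> p.1 <= x < p.2 -> X x.
Proof.
case=> Hb _ _ pP /andP[x1 x2]; have [p1 [p12 p2]] := Hb p pP.
by rewrite XE (le_trans p1 x1) (lt_le_trans x2 p2).
Qed.

Lemma blk_uniq P p q x : assoc_partition h P -> p \in P -> q \in P ->
  p.1 <= x < p.2 -> q.1 <= x < q.2 -> p = q.
Proof.
move=> A pP qP xp xq; apply/eqP; apply: contraT => npq.
have Xx := assoc_X A pP xp.
have := two_in (assoc_uniq A) pP qP npq (a := blk x) xp xq.
by case: A => _ -> .
Qed.

Lemma fst_inj P p q : assoc_partition h P -> p \in P -> q \in P -> p.1 = q.1 -> p = q.
Proof.
move=> A pP qP e; have [p1 [p12 p2]] := (let: And3 Hb _ _ := A in Hb p pP).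
have [q1 [q12 q2]] := (let: And3 Hb _ _ := A in Hb q qP).
apply: (blk_uniq A pP qP (x := p.1)); first by rewrite lexx p12.
by rewrite e lexx q12.
Qed.

Lemma blk_ex P x : assoc_partition h P -> X x -> exists2 p, p \in P & p.1 <= x < p.2.
Proof.
case=> _ Hc _ Xx; have := Hc x Xx => c1.
have : has (blk x) P by rewrite has_count c1.
by case/hasP => p pP bp; exists p.
Qed.

Hypothesis hbij : set_bij (@X R) (@X R) h.

Lemma hinj x y : X x -> X y -> h x = h y -> x = y.
Proof. case: hbij => _ hi _ Xx Xy; apply: hi; by rewrite inE. Qed.

Lemma hfun x : X x -> X (h x).
Proof. by case: hbij => hf _ _; apply: hf. Qed.

Lemma fstX P p : assoc_partition h P -> p \in P -> X p.1.
Proof.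
move=> A pP; have [p1 [p12 p2]] := (let: And3 Hb _ _ := A in Hb p pP).
by apply: (assoc_X A pP); rewrite lexx p12.
Qed.

Lemma hS_uniq P : assoc_partition h P -> uniq (hS P).
Proof.
move=> A; rewrite map_inj_in_uniq ?(assoc_uniq A) // => p q pP qP e.
by apply: (fst_inj A pP qP); apply: hinj => //; apply: (fstX A).
Qed.

Lemma sigma_in P p : assoc_partition h P -> p \in P -> sigma h P (h p.1) = beta h p.
Proof.
move=> A pP; rewrite /sigma /=.
set i := find _ _.
have hi : (i < size P)%N by rewrite /i -has_find; apply/hasP; exists p => /=.
rewrite hi.
have qP : nth (0, 0) P i \in P by apply: mem_nth.
have : h (nth (0, 0) P i).1 == h p.1.
  by apply: (@nth_find _ (0,0) (fun q => h q.1 == h p.1)); apply/hasP; exists p.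
move/eqP/hinj => e; rewrite (fst_inj A qP pP) // e //; by apply: (fstX A).
Qed.

Lemma sigma_out P x : x \notin hS P -> sigma h P x = x.
Proof.
move=> xS; rewrite /sigma /=.
have -> : find (fun p => h p.1 == x) P = size P.
  apply/eqP; rewrite eqn_leq find_size /= leqNgt -has_find.
  apply/hasP => -[p pP /eqP e]; move: xS; rewrite -e.
  by move/negP; apply; apply: (map_f (fun p => h p.1)).
by rewrite ltnn.
Qed.

Lemma sgn_perm (s : R -> R) (S S' : seq R) : perm_eq S S' -> sgn_on s S = sgn_on s S'.
Proof.
move=> pS; rewrite /sgn_on (perm_big _ pS) /=; congr odd.
by apply: eq_bigr => x _; apply: perm_big.
Qed.

Lemma sgn_eq (s s' : R -> R) (S : seq R) : {in S, s =1 s'} -> sgn_on s S = sgn_on s' S.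
Proof. by move=> e; rewrite !sgn_inv (inv_eq e). Qed.

Lemma assoc_perm P Q : assoc_partition h P -> perm_eq P Q -> assoc_partition h Q.
Proof.
case=> Hb Hc Hk pPQ; split.
- by move=> p; rewrite -(perm_mem pPQ); apply: Hb.
- by move=> x Xx; rewrite -(permP pPQ); apply: Hc.
- by move=> p; rewrite -(perm_mem pPQ); apply: Hk.
Qed.

Lemma eps_perm P Q : assoc_partition h P -> perm_eq P Q -> eps h P = eps h Q.
Proof.
move=> A pPQ; have B := assoc_perm A pPQ.
rewrite /eps /Rdec (permP pPQ); congr (_ (+) _).
rewrite (sgn_perm _ (perm_map (fun p => h p.1) pPQ)).
apply: sgn_eq => x /mapP [q qQ ->].
by rewrite (sigma_in A) ?(perm_mem pPQ) // (sigma_in B).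
Qed.

End Part.

Section Ana.
Variable R : realType.
Variable h : R -> R.
Hypothesis hbij : set_bij (@X R) (@X R) h.

Definition ok (a b : R) :=
  [/\ 0 <= a, a < b, b <= 1 & forall x, a < x < b -> {for x, continuous h}].
Definition incr (a b : R) :=
  forall x y, a < x < b -> a < y < b -> x < y -> h x < h y.

Lemma mid1 (a b : R) : a < b -> a < (a + b) / 2.
Proof. by move/midf_lt => []. Qed.
Lemma mid2 (a b : R) : a < b -> (a + b) / 2 < b.
Proof. by move/midf_lt => []. Qed.

Lemma ok_X a b x : ok a b -> a < x < b -> X x.
Proof.
case=> a0 ab b1 _ /andP[ax xb]; rewrite XE.
by rewrite (le_trans a0 (ltW ax)) (lt_le_trans xb b1).
Qed.

Lemma ok_mono a b : ok a b -> incr a b \/ decreasing_on h (a, b).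
Proof.
move=> o; have [a0 ab b1 hc] := o.
have C : {within [set` `]a, b[], continuous h}.
  apply: continuous_in_subspaceT => x; rewrite inE /= in_itv /= => xI.
  exact: hc.
have I : {in `]a, b[ &, injective h}.
  move=> x y; rewrite !in_itv /= => xI yI; apply: (hinj hbij); exact: (ok_X o).
case: (itv_continuous_inj_mono C I) => H; [left|right] => x y xI yI xy;
  by apply: H; rewrite ?in_itv /= ?xI ?yI.
Qed.

Lemma img_ne a b : ok a b -> nonempty (h @` `]a, b[%classic).
Proof.
case=> _ ab _ _; exists (h ((a + b) / 2)); exists ((a + b) / 2) => //=.
by rewrite in_itv /= mid1 // mid2.
Qed.

Lemma img_lb a b : ok a b -> has_lbound (h @` `]a, b[%classic).
Proof.
move=> o; exists 0 => _ [x /= xI <-]; rewrite in_itv /= in xI.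
by have := hfun hbij (ok_X o xI); rewrite XE => /andP[].
Qed.

Lemma beta_le a b x : ok a b -> a < x < b -> beta h (a, b) <= h x.
Proof.
move=> o xI; apply: (ge_inf (img_lb o)); exists x => //=; by rewrite in_itv.
Qed.

Lemma beta_adh a b e : ok a b -> 0 < e -> exists2 x, a < x < b & h x < beta h (a, b) + e.
Proof.
move=> o e0; have [_ [x /= xI <-] lt] := inf_adherent e0 (conj (img_ne o) (img_lb o)).
by exists x; rewrite ?in_itv in xI.
Qed.

Lemma beta_char a b m : ok a b -> (forall x, a < x < b -> m <= h x) ->
  (forall e, 0 < e -> exists2 x, a < x < b & h x < m + e) -> beta h (a, b) = m.
Proof.
move=> o lb ad; apply/eqP; rewrite eq_le; apply/andP; split.
  apply/ler_addgt0Pr => e e0; have [x xI hx] := ad e e0.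
  exact: le_trans (beta_le o xI) (ltW hx).
apply: lb_le_inf; first exact: img_ne.
by move=> _ [x /= xI <-]; apply: lb; rewrite in_itv in xI.
Qed.

Lemma below a b z : ok a b -> a < z < b -> exists2 z', a < z' < b & h z' < h z.
Proof.
move=> o /andP[az zb]; have zI : a < z < b by rewrite az zb.
have I1 : a < (a + z) / 2 < b by rewrite mid1 // (lt_trans (mid2 az)).
have I2 : a < (z + b) / 2 < b by rewrite mid2 // (lt_trans az (mid1 zb)).
case: (ok_mono o) => H.
  by exists ((a + z) / 2) => //; apply: H => //; apply: mid2.
by exists ((z + b) / 2) => //; apply: H => //; apply: mid1.
Qed.

Lemma above a b z : ok a b -> a < z < b -> exists2 z', a < z' < b & h z < h z'.
Proof.
move=> o /andP[az zb]; have zI : a < z < b by rewrite az zb.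
have I1 : a < (a + z) / 2 < b by rewrite mid1 // (lt_trans (mid2 az)).
have I2 : a < (z + b) / 2 < b by rewrite mid2 // (lt_trans az (mid1 zb)).
case: (ok_mono o) => H.
  by exists ((z + b) / 2) => //; apply: H => //; apply: mid1.
by exists ((a + z) / 2) => //; apply: H => //; apply: mid2.
Qed.

Lemma ivt_blk a b x1 x2 t : ok a b -> a < x1 < b -> a < x2 < b ->
  h x1 <= t <= h x2 -> exists2 x, a < x < b & h x = t.
Proof.
move=> o /andP[a1 b1] /andP[a2 b2] /andP[t1 t2]; have [_ _ _ hc] := o.
have gen : forall u v, a < u -> v < b -> u <= v ->
    Num.min (h u) (h v) <= t <= Num.max (h u) (h v) -> exists2 x, a < x < b & h x = t.
  move=> u v au vb uv tI.
  have C : {within `[u, v], continuous h}.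
    apply: continuous_in_subspaceT => x; rewrite inE /= in_itv /= => /andP[ux xv].
    by apply: hc; rewrite (lt_le_trans au ux) (le_lt_trans xv vb).
  have [c cI hc'] := IVT uv C tI.
  exists c => //; move: cI; rewrite in_itv /= => /andP[uc cv].
  by rewrite (lt_le_trans au uc) (le_lt_trans cv vb).
have tI1 : Num.min (h x1) (h x2) <= t <= Num.max (h x1) (h x2).
  by rewrite ge_min le_max t1 t2 orbT.
have tI2 : Num.min (h x2) (h x1) <= t <= Num.max (h x2) (h x1).
  by rewrite ge_min le_max t1 t2 orbT.
case: (leP x1 x2) => x12.
  exact: gen x12 tI1.
exact: gen (ltW x12) tI2.
Qed.

Lemma above_beta a b t x0 : ok a b -> a < x0 < b -> beta h (a, b) < t -> t <= h x0 ->
  exists2 x, a < x < b & h x = t.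
Proof.
move=> o x0I bt tx; have e0 : 0 < t - beta h (a, b) by rewrite subr_gt0.
have [x1 x1I hx1] := beta_adh o e0.
apply: (ivt_blk o x1I x0I); rewrite tx andbT.
by move: hx1; rewrite addrCA subrr addr0 => /ltW.
Qed.


Lemma cont_eps (c e : R) : {for c, continuous h} -> 0 < e ->
  exists2 d : R, 0 < d & forall x, `|c - x| < d -> `|h c - h x| < e.
Proof.
move=> hc e0.
have : \forall t \near c, `|h c - h t| < e.
  by apply: (@cvgr_dist_lt _ _ _ (nbhs c) _ h (h c) hc e e0).
by case/nbhs_ballP => d d0 H; exists d => // x cx; apply: (H x).
Qed.

Lemma ok_l a c b : ok a b -> a < c < b -> ok a c.
Proof.
case=> a0 ab b1 hc /andP[ac cb]; split => //; first exact: le_trans (ltW cb) b1.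
by move=> x /andP[ax xc]; apply: hc; rewrite ax (lt_trans xc cb).
Qed.

Lemma ok_r a c b : ok a b -> a < c < b -> ok c b.
Proof.
case=> a0 ab b1 hc /andP[ac cb]; split => //; first exact: le_trans a0 (ltW ac).
by move=> x /andP[cx xb]; apply: hc; rewrite xb (lt_trans ac cx).
Qed.

Lemma right_pt a b c e : ok a b -> a < c < b -> 0 < e ->
  exists2 x, c < x < b & h x < h c + e.
Proof.
move=> o /andP[ac cb] e0; have [_ _ _ hc] := o.
have [d d0 H] := cont_eps (hc c ltac:(by rewrite ac cb)) e0.
set del := Num.min d (b - c).
have del0 : 0 < del by rewrite lt_min d0 subr_gt0.
have hd : 0 < del / 2 by rewrite divr_gt0.
have hd2 : del / 2 < del by rewrite ltr_pdivrMr // ltr_pMr // ltr1n.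
exists (c + del / 2).
  rewrite ltrDl hd /= -ltrBrDl (lt_le_trans hd2) //.
  by rewrite /del ge_min lexx orbT.
have := H (c + del / 2); rewrite opprD addrA subrr sub0r normrN gtr0_norm //.
move=> /(_ (lt_le_trans hd2 _)) /=; rewrite /del ge_min lexx => /(_ isT).
by rewrite ltr_distlC => /andP[_].
Qed.

Lemma left_pt a b c e : ok a b -> a < c < b -> 0 < e ->
  exists2 x, a < x < c & h x < h c + e.
Proof.
move=> o /andP[ac cb] e0; have [_ _ _ hc] := o.
have [d d0 H] := cont_eps (hc c ltac:(by rewrite ac cb)) e0.
set del := Num.min d (c - a).
have del0 : 0 < del by rewrite lt_min d0 subr_gt0.
have hd : 0 < del / 2 by rewrite divr_gt0.
have hd2 : del / 2 < del by rewrite ltr_pdivrMr // ltr_pMr // ltr1n.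
exists (c - del / 2).
  rewrite gtrDl oppr_lt0 hd andbT ltrBrDl -ltrBrDr (lt_le_trans hd2) //.
  by rewrite /del ge_min lexx orbT.
have := H (c - del / 2); rewrite opprB addrC subrK gtr0_norm //.
move=> /(_ (lt_le_trans hd2 _)) /=; rewrite /del ge_min lexx => /(_ isT).
by rewrite ltr_distlC => /andP[_].
Qed.

Lemma beta_split_inc a c b : ok a b -> a < c < b -> incr a b ->
  beta h (a, c) = beta h (a, b) /\ beta h (c, b) = h c.
Proof.
move=> o cI H; have /andP[ac cb] := cI; split.
- apply: (beta_char (ok_l o cI)).
    by move=> x /andP[ax xc]; apply: (beta_le o); rewrite ax (lt_trans xc cb).
  move=> e e0; have [x /andP[ax xb] hx] := beta_adh o e0.
  case: (ltP x c) => xc; first by exists x; rewrite ?ax.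
  have yI : a < (a + c) / 2 < c by rewrite mid1 // mid2.
  exists ((a + c) / 2) => //; apply: lt_trans hx; apply: H.
  + by rewrite mid1 // (lt_trans (mid2 ac)).
  + by rewrite ax.
  + exact: lt_le_trans (mid2 ac) xc.
- apply: (beta_char (ok_r o cI)).
    by move=> x /andP[cx xb]; apply/ltW/H; rewrite ?ac ?cb ?xb ?(lt_trans ac cx).
  by move=> e e0; apply: (right_pt o cI e0).
Qed.

Lemma beta_split_dec a c b : ok a b -> a < c < b -> decreasing_on h (a, b) ->
  beta h (a, c) = h c /\ beta h (c, b) = beta h (a, b).
Proof.
move=> o cI H; have /andP[ac cb] := cI; split.
- apply: (beta_char (ok_l o cI)).
    by move=> x /andP[ax xc]; apply/ltW/H; rewrite /= ?ac ?cb ?ax ?(lt_trans xc cb).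
  by move=> e e0; apply: (left_pt o cI e0).
- apply: (beta_char (ok_r o cI)).
    by move=> x /andP[cx xb]; apply: (beta_le o); rewrite xb (lt_trans ac cx).
  move=> e e0; have [x /andP[ax xb] hx] := beta_adh o e0.
  case: (ltP c x) => cx; first by exists x; rewrite ?cx.
  have yI : c < (c + b) / 2 < b by rewrite mid1 // mid2.
  exists ((c + b) / 2) => //; apply: lt_trans hx; apply: H => /=.
  + by rewrite ax.
  + by rewrite mid2 // (lt_trans ac (mid1 cb)).
  + exact: le_lt_trans cx (mid1 cb).
Qed.

End Ana.

Section Main.
Variable R : realType.
Variable h : R -> R.
Hypothesis hbij : set_bij (@X R) (@X R) h.
Implicit Types (P Q : seq (R * R)) (p q : R * R).

Lemma assoc_ok P p : assoc_partition h P -> p \in P -> ok h p.1 p.2.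
Proof. by case=> Hb _ Hk pP; have [? [? ?]] := Hb p pP; split => //; exact: Hk p pP. Qed.

Lemma common P p q x y : assoc_partition h P -> p \in P -> q \in P ->
  p.1 < x < p.2 -> q.1 < y < q.2 -> h x = h y -> p = q.
Proof.
move=> A pP qP xI yI e.
have exy : x = y.
  by apply: (hinj hbij) e; [exact: ok_X (assoc_ok A pP) xI | exact: ok_X (assoc_ok A qP) yI].
move: xI yI; rewrite -exy => /andP[x1 x2] /andP[y1 y2].
by apply: (blk_uniq A pP qP (x := x)); rewrite ?ltW ?x2 ?y2.
Qed.

Lemma beta_lt_mid p : ok h p.1 p.2 -> beta h p < h ((p.1 + p.2) / 2).
Proof.
case: p => a b /= o; have [_ ab _ _] := o.
have mI : a < (a + b) / 2 < b by rewrite mid1 // mid2.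
have [z zI hz] := below hbij o mI.
exact: le_lt_trans (beta_le hbij o zI) hz.
Qed.

Lemma beta_inj P p q : assoc_partition h P -> p \in P -> q \in P ->
  beta h p = beta h q -> p = q.
Proof.
move=> A pP qP e.
have op := assoc_ok A pP; have oq := assoc_ok A qP.
have lp := beta_lt_mid op; have lq := beta_lt_mid oq.
move: op oq lp lq e pP qP; case: p => a b; case: q => a' b' /= op oq lp lq e pP qP.
have [_ ab _ _] := op; have [_ ab' _ _] := oq.
set w := Num.min (h ((a + b) / 2)) (h ((a' + b') / 2)).
have bw : beta h (a, b) < w by rewrite lt_min lp e lq.
set t := (beta h (a, b) + w) / 2.
have bt : beta h (a, b) < t by apply: mid1.
have tw : t <= w by apply/ltW/mid2.
have w1 : w <= h ((a + b) / 2) by rewrite /w ge_min lexx.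
have w2 : w <= h ((a' + b') / 2) by rewrite /w ge_min lexx orbT.
have m1 : a < (a + b) / 2 < b by rewrite mid1 // mid2.
have m2 : a' < (a' + b') / 2 < b' by rewrite mid1 // mid2.
have bt' : beta h (a', b') < t by rewrite -e.
have [x xI hx] := above_beta hbij op m1 bt (le_trans tw w1).
have [y yI hy] := above_beta hbij oq m2 bt' (le_trans tw w2).
by apply: (common A pP qP xI yI); rewrite hx hy.
Qed.

Lemma beta_in P p : assoc_partition h P -> p \in P -> beta h p \in hS h P.
Proof.
move=> A pP; have op := assoc_ok A pP.
have lp := beta_lt_mid op.
move: op lp pP; case: p => a b /= op lp pP; have [a0 ab b1 _] := op.
have mI : a < (a + b) / 2 < b by rewrite mid1 // mid2.
have Xb : X (beta h (a, b)).
  rewrite XE; apply/andP; split.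
    apply: lb_le_inf; first exact: img_ne.
    move=> _ [x /= xI <-]; rewrite in_itv /= in xI.
    by have := hfun hbij (ok_X op xI); rewrite XE => /andP[].
  apply: lt_le_trans lp _.
  by have := hfun hbij (ok_X op mI); rewrite XE => /andP[_ /ltW].
have [z Xz hz] : exists2 z, X z & h z = beta h (a, b).
  by case: hbij => _ _ /(_ _ Xb) [z Xz hz]; exists z.
have [q qP /andP[q1 q2]] := blk_ex A Xz.
case: (eqVneq z q.1) => [zq|zq].
  by rewrite -hz zq; apply: (map_f (fun p => h p.1)).
have zI : q.1 < z < q.2 by rewrite lt_neqAle eq_sym zq q1 q2.
have oq := assoc_ok A qP.
have [z' z'I hz'] := above hbij oq zI.
set w := Num.min (h ((a + b) / 2)) (h z').
have bw : beta h (a, b) < w by rewrite lt_min lp -hz hz'.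
set t := (beta h (a, b) + w) / 2.
have bt : beta h (a, b) < t by apply: mid1.
have tw : t <= w by apply/ltW/mid2.
have w1 : w <= h ((a + b) / 2) by rewrite /w ge_min lexx.
have [x xI hx] := above_beta hbij op mI bt (le_trans tw w1).
have tI : h z <= t <= h z'.
  rewrite hz (ltW bt) /=.
  by apply: le_trans tw _; rewrite /w ge_min lexx orbT.
have [y yI hy] := ivt_blk oq zI z'I tI.
have hxy : h x = h y by rewrite hx hy.
have pq := common A pP qP xI yI hxy.
rewrite -pq /= in zI.
have [z'' z''I hz''] := below hbij op zI.
have := beta_le hbij op z''I; rewrite -hz => /(lt_le_trans hz''); by rewrite ltxx.
Qed.

Lemma sigma_perm P : assoc_partition h P ->
  perm_eq (map (sigma h P) (hS h P)) (hS h P).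
Proof.
move=> A.
have -> : map (sigma h P) (hS h P) = map (beta h) P.
  by rewrite /hS -map_comp; apply/eq_in_map => p pP /=; exact: (sigma_in hbij).
have u1 : uniq (map (beta h) P).
  rewrite map_inj_in_uniq ?(assoc_uniq A) //.
  by move=> p q pP qP; apply: (beta_inj A).
apply: uniq_perm => //; first exact: (hS_uniq hbij).
have sub : {subset map (beta h) P <= hS h P}.
  by move=> x /mapP [p pP ->]; apply: beta_in.
have sz : (size (hS h P) <= size (map (beta h) P))%N by rewrite !size_map.
by have [_ E] := uniq_min_size u1 sub sz.
Qed.


Lemma incr_not_dec a b u v : incr h a b -> a <= u -> u < v -> v <= b ->
  ~ decreasing_on h (u, v).
Proof.
move=> H au uv vb D.
set m := (u + v) / 2; set x1 := (u + m) / 2.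
have um : u < m by apply: mid1.
have mv : m < v by apply: mid2.
have ux : u < x1 by apply: mid1.
have xm : x1 < m by apply: mid2.
have h1 : h m < h x1 by apply: D; rewrite /= ?ux ?um ?mv ?(lt_trans xm mv).
have h2 : h x1 < h m.
  apply: H => //.
    by rewrite (le_lt_trans au ux) (lt_le_trans (lt_trans xm mv) vb).
  by rewrite (le_lt_trans au um) (lt_le_trans mv vb).
by move: (lt_trans h1 h2); rewrite ltxx.
Qed.

Lemma dec_sub a b u v : decreasing_on h (a, b) -> a <= u -> v <= b ->
  decreasing_on h (u, v).
Proof.
move=> D au vb x y /andP[ux xv] /andP[uy yv] xy; apply: D => //=.
  by rewrite (le_lt_trans au ux) (lt_le_trans xv vb).
by rewrite (le_lt_trans au uy) (lt_le_trans yv vb).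
Qed.

Lemma perm_swap2 (x y : R) (s : seq R) : perm_eq [:: x, y & s] [:: y, x & s].
Proof.
have := perm_catCA [:: x] [:: y] s => /(_ [:: y, x & s]).
by rewrite perm_refl.
Qed.

Lemma split_eps P0 a c b :
  assoc_partition h ((a, b) :: P0) -> assoc_partition h [:: (a, c), (c, b) & P0] ->
  a < c < b -> eps h [:: (a, c), (c, b) & P0] = eps h ((a, b) :: P0).
Proof.
move=> A A' cI; have /andP[ac cb] := cI.
have o : ok h a b by apply: (assoc_ok A (mem_head _ _)).
set P := (a, b) :: P0; set P' := [:: (a, c), (c, b) & P0].
set T := hS h P0.
have uS : uniq (h a :: T) by apply: (hS_uniq hbij A).
have uS' : uniq [:: h a, h c & T] by apply: (hS_uniq hbij A').
move: (uS) (uS') => /= /andP[haT _] /and3P[]; rewrite inE negb_or => /andP[nac _] hcT _.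
have hcS : h c \notin h a :: T by rewrite inE negb_or eq_sym nac.
have sT : {in T, sigma h P' =1 sigma h P}.
  move=> t /mapP [q qP ->].
  rewrite (sigma_in hbij A') ?(sigma_in hbij A) //.
    by rewrite inE qP orbT.
  by rewrite !inE qP !orbT.
have sa : sigma h P (h a) = beta h (a, b) by apply: (sigma_in hbij A (mem_head _ _)).
have s'a : sigma h P' (h a) = beta h (a, c) by apply: (sigma_in hbij A' (mem_head _ _)).
have s'c : sigma h P' (h c) = beta h (c, b).
  by apply: (sigma_in hbij A' (p := (c, b))); rewrite !inE eqxx orbT.
have pS : perm_eq (map (sigma h P) (h a :: T)) (h a :: T) by apply: (sigma_perm A).
have bS : beta h (a, b) \in h a :: T by apply: (beta_in A (mem_head _ _)).
rewrite /eps /Rdec /hS /= -/T.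
case: (ok_mono hbij o) => H.
- have [e1 e2] := beta_split_inc hbij o cI H.
  rewrite (asboolF (incr_not_dec H (lexx a) (lt_trans ac cb) (lexx b))).
  rewrite (asboolF (incr_not_dec H (ltW ac) cb (lexx b))).
  rewrite (asboolF (incr_not_dec H (lexx a) ac (ltW cb))).
  rewrite /= !add0n; congr (_ (+) _).
  rewrite (sgn_perm _ (perm_swap2 _ _ _)) !sgn_inv odd_fix; first last.
  + by rewrite s'c e2.
  + exact: hcS.
  + have -> : map (sigma h P') (h a :: T) = map (sigma h P) (h a :: T) => //.
    apply/eq_in_map => x; rewrite inE => /orP[/eqP ->|xT]; first by rewrite s'a sa e1.
    exact: sT.
  congr odd; apply: inv_eq => x; rewrite inE => /orP[/eqP ->|xT]; first by rewrite s'a sa e1.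
  exact: sT.
- have [e1 e2] := beta_split_dec hbij o cI H.
  rewrite (asboolT H) (asboolT (dec_sub H (ltW ac) (lexx b))).
  rewrite (asboolT (dec_sub H (lexx a) (ltW cb))).
  set st := fun x => if x == h c then h c else sigma h P x.
  have stS : {in h a :: T, st =1 sigma h P}.
    move=> x xS; rewrite /st; case: eqP => // ex.
    by move: hcS; rewrite -ex xS.
  have sw : odd (inv (sigma h P') [:: h a, h c & T]) = ~~ odd (inv st [:: h a, h c & T]).
    apply: odd_swap => //.
    + by rewrite stS ?mem_head // /st eqxx sa; apply: contraNneq hcS => <-.
    + move=> t tT; have tS : t \in h a :: T by rewrite inE tT orbT.
      rewrite (stS _ tS) (stS _ (mem_head _ _)) /st eqxx; split.
        move: (perm_uniq pS); rewrite uS /= => /andP[nin _].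
        by apply: contraNneq nin => <-; apply: map_f.
      apply: contraNneq hcS => <-; rewrite -(perm_mem pS); exact: map_f.
    + by rewrite s'a e1 /st eqxx.
    + by rewrite s'c e2 stS ?mem_head // sa.
    + move=> t tT; rewrite sT // stS //; by rewrite inE tT orbT.
  rewrite !sgn_inv sw.
  have -> : odd (inv st [:: h a, h c & T]) = odd (inv (sigma h P) (h a :: T)).
    rewrite -!sgn_inv (sgn_perm _ (perm_swap2 _ _ _)) !sgn_inv odd_fix; first last.
    + by rewrite /st eqxx.
    + exact: hcS.
    + have -> : map st (h a :: T) = map (sigma h P) (h a :: T) => //.
      by apply/eq_in_map.
    by rewrite (inv_eq stS).
  rewrite /T /hS !oddD /=.
  by case: (odd (count _ _)); case: (odd (inv _ _)).
Qed.

End Main.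

Section Final.
Variable R : realType.
Variable h : R -> R.
Hypothesis hbij : set_bij (@X R) (@X R) h.
Implicit Types (P Q : seq (R * R)) (p q : R * R).

Lemma refine1 P c : assoc_partition h P -> X c -> c \notin map fst P ->
  exists P', [/\ assoc_partition h P', map fst P' =i c :: map fst P & eps h P' = eps h P].
Proof.
move=> A Xc cF.
have [p pP /andP[pc cp]] := blk_ex A Xc.
have pp := perm_to_rem pP.
have A1 := assoc_perm A pp.
move: A1 pp pP pc cp; case: p => a b A1 pp pP /= pc cp.
set P0 := rem (a, b) P in A1 pp *.
have ac : a < c.
  rewrite lt_neqAle pc andbT; apply: contraNneq cF => <-.
  by apply: (map_f fst pP).
have cI : a < c < b by rewrite ac cp.
have [Hb Hc Hk] := A1.
have [a0 [ab b1]] := Hb _ (mem_head _ _).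
have A' : assoc_partition h [:: (a, c), (c, b) & P0].
  split.
  - move=> q; rewrite !inE => /orP[/eqP ->|/orP[/eqP ->|qP]] /=.
    + by rewrite a0 ac (le_trans (ltW cp) b1).
    + by rewrite (le_trans a0 (ltW ac)) cp b1.
    + by apply: Hb; rewrite inE qP orbT.
  - move=> x Xx; have := Hc x Xx; rewrite /= => <-.
    rewrite addnA; congr addn.
    case: (ltP x c) => xc /=.
      by rewrite (lt_trans xc cp) andbT addn0.
    by rewrite andbF add0n (le_trans (ltW ac) xc).
  - move=> q; rewrite !inE => /orP[/eqP ->|/orP[/eqP ->|qP]] /= x xI.
    + apply: (Hk _ (mem_head _ _)); move: xI => /andP[ax xc].
      by rewrite /= ax (lt_trans xc cp).
    + apply: (Hk _ (mem_head _ _)); move: xI => /andP[cx xb].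
      by rewrite /= xb (lt_trans ac cx).
    + by apply: (Hk q); rewrite ?inE ?qP ?orbT.
exists [:: (a, c), (c, b) & P0]; split => //.
  move=> x; have := perm_mem (perm_map fst pp) x; rewrite /= !inE => ->.
  by rewrite orbCA.
rewrite (split_eps hbij A1 A' cI).
by apply/esym/(eps_perm hbij A).
Qed.

Lemma refine P C : assoc_partition h P -> all (fun c => `[< X c >]) C ->
  exists P', [/\ assoc_partition h P', map fst P' =i map fst P ++ C & eps h P' = eps h P].
Proof.
elim: C P => [|c C IH] P A XC.
  by exists P; split => //; move=> x; rewrite cats0.
move: XC => /= /andP[/asboolP Xc XC].
have [P1 [A1 F1 E1]] : exists P1, [/\ assoc_partition h P1,
    map fst P1 =i c :: map fst P & eps h P1 = eps h P].
  case: (boolP (c \in map fst P)) => cF; last exact: refine1.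
  by exists P; split => //; move=> x; rewrite inE; case: eqP => // ->; rewrite cF.
have [P2 [A2 F2 E2]] := IH P1 A1 XC.
exists P2; split => //; last by rewrite E2.
move=> x; rewrite F2 mem_cat F1 !inE mem_cat !inE.
by case: (x == c); case: (x \in C); case: (x \in _).
Qed.

Lemma no_inner P Q a b b' : assoc_partition h P -> assoc_partition h Q ->
  map fst P =i map fst Q -> (a, b) \in P -> (a, b') \in Q -> ~ b < b'.
Proof.
move=> A B F pP qQ bb'.
have [a0 [ab b1]] := (let: And3 Hb _ _ := A in Hb _ pP).
have [_ [_ b1']] := (let: And3 Hb _ _ := B in Hb _ qQ).
have Xb : X b by rewrite XE (le_trans a0 (ltW ab)) (lt_le_trans bb' b1').
have [r rP /andP[r1 r2]] := blk_ex A Xb.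
have rb : r.1 = b.
  apply/eqP; rewrite eq_le r1 /=; rewrite leNgt; apply/negP => rb.
  have := blk_uniq A pP rP (x := Num.max a r.1).
  rewrite le_max lexx /= gt_max ab rb /= le_max lexx orbT /=.
  rewrite (lt_trans _ r2) ?gt_max ?ab ?rb // => /(_ isT isT) e.
  by move: r2; rewrite -e /= ltxx.
have : b \in map fst Q by rewrite -F -rb; apply: map_f.
case/mapP => s sQ sb.
have [_ [s12 _]] := (let: And3 Hb _ _ := B in Hb _ sQ).
have := blk_uniq B qQ sQ (x := b); rewrite /= (ltW ab) bb' -sb lexx /= sb.
move=> /(_ isT s12) e; have := congr1 fst e; rewrite /= -sb => eab.
by move: ab; rewrite eab ltxx.
Qed.

Lemma same_cuts P Q : assoc_partition h P -> assoc_partition h Q ->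
  map fst P =i map fst Q -> perm_eq P Q.
Proof.
have sub : forall P Q, assoc_partition h P -> assoc_partition h Q ->
    map fst P =i map fst Q -> {subset P <= Q}.
  move=> P1 Q1 A B F [a b] pP.
  have : a \in map fst Q1 by rewrite -F; apply: (map_f fst pP).
  case/mapP => -[a' b'] qQ /= ea; rewrite -ea in qQ.
  suff -> : b = b' by [].
  case: (ltgtP b b') => // bb'.
    by case: (no_inner A B F pP qQ bb').
  have F' : map fst Q1 =i map fst P1 by move=> x; rewrite F.
  by case: (no_inner B A F' qQ pP bb').
move=> A B F; apply: uniq_perm; rewrite ?(assoc_uniq A) ?(assoc_uniq B) //.
move=> p; apply/idP/idP; first exact: sub.
by apply: sub => // x; rewrite F.
Qed.

End Final.

Theorem lemma3p6 (R : realType) (h : R -> R) (Pmin P : seq (R * R)) :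
  in_PCbowtie h ->
  min_assoc_partition h Pmin ->
  assoc_partition h P ->
  eps h Pmin = eps h P.
Proof.
move=> [hbij _] [Am _] A.
have allX : forall Q, assoc_partition h Q -> all (fun c => `[< X c >]) (map fst Q).
  move=> Q B; apply/allP => c /mapP [q qQ ->]; apply/asboolP.
  exact: (fstX B qQ).
have [P1 [A1 F1 E1]] := refine hbij A (allX _ Am).
have [P2 [A2 F2 E2]] := refine hbij Am (allX _ A).
have pe : perm_eq P1 P2.
  apply: (same_cuts A1 A2) => x.
  by rewrite F1 F2 !mem_cat orbC.
by rewrite -E1 -E2 (eps_perm hbij A1 pe).
Qed.
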